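(* Let $n\ge 3$ and let $X_n$ be the doubled regular $n$-gon. Let $\gamma\colon S^1\to X_n$ be an over-under curve between adjacent edges on $X_n$. Then: (1) if $n$ is even, $\gamma$ is a $1/n$-geodesic; (2) if $n$ is odd, $\gamma$ is a $1/2n$-geodesic.
   Context: The doubled regular $n$-gon $X_n$ is the metric space obtained by gluing two congruent regular $n$-gons (a ''top face'' and a ''bottom face'') along their common boundary edges. The distance between two points on the same face is the Euclidean distance; the distance between points $x,y$ on opposite faces is $\min_z\{d(x,z)+d(z,y)\}$, where $d$ is the Euclidean distance on each face and $z$ ranges over the boundary (edge) points. A geodesic is a locally length-minimizing curve; a closed geodesic is a map $\gamma\colon S^1\to X_n$ that is locally length minimizing at every $t\in S^1$. Geodesics are straight segments within each face and, when crossing an edge from one face to the other, reflect like billiard paths (angle of incidence equals angle of reflection). An over-under curve between adjacent edges is the closed geodesic (parametrized with constant speed and traversed once until it closes up smoothly) that passes through the midpoints of adjacent edges: its segments join the midpoints of consecutive adjacent edges, alternately on the top and bottom faces. (For $n$ even it closes smoothly after $n$ segments; for $n$ odd it needs $2n$ segments.) For $k\in\mathbb{N}$, a $1/k$-geodesic is a constant speed closed geodesic $\gamma\colon S^1\to X_n$ of length $L$ that minimizes on all subintervals of length $L/k$, i.e. for every subinterval of $S^1$ on which $\gamma$ has length $L/k$, the length of $\gamma$ restricted to it equals the distance in $X_n$ between its endpoints. *)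

(* Defs.v *)
From Stdlib Require Import Reals Lra Lia.
From Coquelicot Require Import Coquelicot.
Open Scope R_scope.

(* ---------- The regular n-gon P_n (circumradius 1) ----------
   Vertices v_j = (cos(2 pi j/n), sin(2 pi j/n)); edge j joins v_j and v_{j+1};
   its outward unit normal has angle (2j+1) pi / n and its distance to the
   centre is cos(pi/n). *)

Definition edge_fun (n j : nat) (x : R * R) : R :=
  fst x * cos ((2 * INR j + 1) * PI / INR n) +
  snd x * sin ((2 * INR j + 1) * PI / INR n).

Definition in_polygon (n : nat) (x : R * R) : Prop :=
  forall j : nat, (j < n)%nat -> edge_fun n j x <= cos (PI / INR n).

Definition on_boundary (n : nat) (x : R * R) : Prop :=
  in_polygon n x /\ exists j : nat, (j < n)%nat /\ edge_fun n j x = cos (PI / INR n).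

Definition eucl (x y : R * R) : R :=
  sqrt ((fst x - fst y) ^ 2 + (snd x - snd y) ^ 2).

(* ---------- The doubled n-gon X_n ----------
   A point is (face, position): face true = top, false = bottom, position in P_n.
   Boundary points of the two faces are identified (see [same_point]); the
   distance below is a pseudo-distance that vanishes exactly on identified
   points, so we work with representatives. *)

Definition Xpoint := (bool * (R * R))%type.

Definition Xdist (n : nat) (p q : Xpoint) : R :=
  if Bool.eqb (fst p) (fst q) then eucl (snd p) (snd q)
  else real (Glb_Rbar (fun r => exists z, on_boundary n z /\
                                   r = eucl (snd p) z + eucl z (snd q))).

Definition same_point (n : nat) (p q : Xpoint) : Prop :=
  p = q \/ (snd p = snd q /\ on_boundary n (snd p)).

Fixpoint psum (f : nat -> R) (m : nat) : R :=
  match m with O => 0 | S m' => psum f m' + f m' end.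

Definition polygonal_sums (n : nat) (gamma : R -> Xpoint) (a b : R) (s : R) : Prop :=
  exists (m : nat) (P : nat -> R),
    P O = a /\ P m = b /\ (forall i, (i < m)%nat -> P i <= P (S i)) /\
    s = psum (fun i => Xdist n (gamma (P i)) (gamma (P (S i)))) m.

Definition curve_length (n : nat) (gamma : R -> Xpoint) (a b l : R) : Prop :=
  is_lub (polygonal_sums n gamma a b) l.

(* ---------- 1/k-geodesics ----------
   S^1 is parametrized as R/Z: gamma : R -> X_n with gamma(t+1) = gamma(t)
   (as points of X_n).  Subintervals (arcs) of S^1 are [a,b] with a<=b<=a+1. *)

Definition one_over_k_geodesic (n k : nat) (gamma : R -> Xpoint) : Prop :=
  exists L : R, 0 < L /\
    (forall t, Xdist n (gamma (t + 1)) (gamma t) = 0) /\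
    (forall a b, a <= b -> curve_length n gamma a b ((b - a) * L)) /\
    (forall t, exists eps, 0 < eps /\ forall a b, t - eps < a -> a <= b -> b < t + eps ->
        curve_length n gamma a b (Xdist n (gamma a) (gamma b))) /\
    (forall a b, a <= b -> b <= a + 1 -> curve_length n gamma a b (L / INR k) ->
        Xdist n (gamma a) (gamma b) = L / INR k).

(* Segment i (i = 0..N-1) joins m_(e+i) to
   m_(e+i+1) on face (f0 xor (i odd)); N = n if n is even, 2n if n is odd.
   Parametrized with period 1 and constant speed. *)

Definition midpt (n j : nat) : R * R :=
  (cos (PI / INR n) * cos ((2 * INR j + 1) * PI / INR n),
   cos (PI / INR n) * sin ((2 * INR j + 1) * PI / INR n)).

Definition nsegs (n : nat) : nat := if Nat.even n then n else (2 * n)%nat.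

Definition over_under_std (n e : nat) (f0 : bool) (t : R) : Xpoint :=
  let tau := INR (nsegs n) * (t - IZR (Int_part t)) in
  let i := Z.to_nat (Int_part tau) in
  let lam := tau - INR i in
  let A := midpt n (e + i) in
  let B := midpt n (e + i + 1) in
  (xorb f0 (Nat.odd i),
   ((1 - lam) * fst A + lam * fst B, (1 - lam) * snd A + lam * snd B)).

(* gamma is an over-under curve between adjacent edges: up to the choice of
   starting edge e, starting face f0, orientation s and starting time t0,
   and up to the choice of representatives of identified boundary points. *)
Definition is_over_under (n : nat) (gamma : R -> Xpoint) : Prop :=
  exists (e : nat) (f0 : bool) (s t0 : R), (s = 1 \/ s = -1) /\
    forall t, same_point n (gamma t) (over_under_std n e f0 (s * t + t0)).

(* Main.v *)
Require Import Defs.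
From Stdlib Require Import Reals Arith Lra Lia ZArith Bool.
From Coquelicot Require Import Coquelicot.
Open Scope R_scope.

Lemma glb_finite (E : R -> Prop) e0 : E e0 -> (forall x, E x -> 0 <= x) ->
  Glb_Rbar E = Finite (real (Glb_Rbar E)).
Proof.
  intros H0 Hlb. destruct (Glb_Rbar_correct E) as [H1 H2].
  destruct (Glb_Rbar E) as [r| |] eqn:Eq; simpl; auto.
  - specialize (H1 e0 H0). simpl in H1. contradiction.
  - assert (Rbar_le (Finite 0) m_infty). { apply H2. intros x Hx. simpl. apply Hlb; auto. }
    simpl in H. contradiction.
Qed.

Lemma glb_le (E : R -> Prop) x : E x -> (forall x, E x -> 0 <= x) ->
  real (Glb_Rbar E) <= x.
Proof.
  intros H0 Hlb. pose proof (glb_finite E x H0 Hlb) as F.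
  destruct (Glb_Rbar_correct E) as [H1 H2]. specialize (H1 x H0).
  rewrite F in H1. simpl in H1. exact H1.
Qed.

Lemma glb_ge (E : R -> Prop) e0 l : E e0 -> (forall x, E x -> 0 <= x) ->
  (forall x, E x -> l <= x) -> l <= real (Glb_Rbar E).
Proof.
  intros H0 Hlb Hl. pose proof (glb_finite E e0 H0 Hlb) as F.
  destruct (Glb_Rbar_correct E) as [H1 H2].
  assert (Rbar_le (Finite l) (Glb_Rbar E)). { apply H2. intros x Hx. simpl. auto. }
  rewrite F in H. simpl in H. exact H.
Qed.

Lemma glb_eq (E : R -> Prop) d : E d -> (forall x, E x -> d <= x) -> 0 <= d ->
  real (Glb_Rbar E) = d.
Proof.
  intros H0 Hl Hd. apply Rle_antisym.
  - apply glb_le; auto. intros x Hx; specialize (Hl x Hx); lra.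
  - apply (glb_ge E d); auto. intros x Hx; specialize (Hl x Hx); lra.
Qed.

Lemma eucl_ge0 x y : 0 <= eucl x y.
Proof. unfold eucl. apply sqrt_pos. Qed.

Lemma eucl_sym x y : eucl x y = eucl y x.
Proof. unfold eucl. f_equal. ring. Qed.

Lemma eucl_xx x : eucl x x = 0.
Proof. unfold eucl. replace ((fst x - fst x) ^ 2 + (snd x - snd x) ^ 2) with 0 by ring. apply sqrt_0. Qed.

Lemma sqrt_le_of_sq x y : 0 <= y -> x <= y * y -> sqrt x <= y.
Proof.
  intros Hy H. rewrite <- (sqrt_square y) by auto.
  destruct (Rle_or_lt 0 x).
  - apply sqrt_le_1; nra.
  - rewrite sqrt_neg_0 by lra. apply sqrt_pos.
Qed.

Lemma le_sqrt_of_sq x y : 0 <= y -> y * y <= x -> y <= sqrt x.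
Proof.
  intros Hy H. rewrite <- (sqrt_square y) by auto. apply sqrt_le_1; nra.
Qed.

Lemma minkowski a b c d :
  sqrt ((a + c) ^ 2 + (b + d) ^ 2) <= sqrt (a ^ 2 + b ^ 2) + sqrt (c ^ 2 + d ^ 2).
Proof.
  apply sqrt_le_of_sq.
  - pose proof (sqrt_pos (a^2+b^2)); pose proof (sqrt_pos (c^2+d^2)); lra.
  - pose proof (sqrt_cauchy a b c d) as Hc. unfold Rsqr in Hc.
    assert (E1: sqrt (a^2+b^2) * sqrt (a^2+b^2) = a^2+b^2) by (apply sqrt_sqrt; nra).
    assert (E2: sqrt (c^2+d^2) * sqrt (c^2+d^2) = c^2+d^2) by (apply sqrt_sqrt; nra).
    replace (a*a+b*b) with (a^2+b^2) in Hc by ring.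
    replace (c*c+d*d) with (c^2+d^2) in Hc by ring.
    nra.
Qed.

Lemma eucl_tri x y z : eucl x z <= eucl x y + eucl y z.
Proof.
  unfold eucl.
  replace ((fst x - fst z) ^ 2 + (snd x - snd z) ^ 2) with
    (((fst x - fst y) + (fst y - fst z)) ^ 2 + ((snd x - snd y) + (snd y - snd z)) ^ 2) by ring.
  apply minkowski.
Qed.

Definition BS n x y := fun r => exists z, on_boundary n z /\ r = eucl x z + eucl z y.

Lemma BS_ge0 n x y r : BS n x y r -> 0 <= r.
Proof. intros [z [_ ->]]. pose proof (eucl_ge0 x z); pose proof (eucl_ge0 z y); lra. Qed.


Lemma XD_eq n f g x y : Xdist n (f, x) (g, y) =
  if Bool.eqb f g then eucl x y else real (Glb_Rbar (BS n x y)).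
Proof. reflexivity. Qed.

Lemma BS_lb n x y r : BS n x y r -> eucl x y <= r.
Proof. intros [z [_ ->]]. apply eucl_tri. Qed.

Lemma XD_bdl n f g x y : on_boundary n x -> Xdist n (f, x) (g, y) = eucl x y.
Proof.
  intros Hb. rewrite XD_eq. destruct (Bool.eqb f g); auto.
  apply glb_eq.
  - exists x. split; auto. rewrite eucl_xx. ring.
  - apply BS_lb.
  - apply eucl_ge0.
Qed.

Lemma XD_bdr n f g x y : on_boundary n y -> Xdist n (f, x) (g, y) = eucl x y.
Proof.
  intros Hb. rewrite XD_eq. destruct (Bool.eqb f g); auto.
  apply glb_eq.
  - exists y. split; auto. rewrite eucl_xx. ring.
  - apply BS_lb.
  - apply eucl_ge0.
Qed.

Lemma BS_sym n x y r : BS n x y r <-> BS n y x r.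
Proof.
  split; intros [z [Hz ->]]; exists z; split; auto; rewrite (eucl_sym x z), (eucl_sym z y); ring.
Qed.

Lemma XD_sym n p q : Xdist n p q = Xdist n q p.
Proof.
  destruct p as [f x], q as [g y]. rewrite !XD_eq.
  destruct f, g; simpl; try apply eucl_sym;
  f_equal; apply Glb_Rbar_eqset; intros r; apply BS_sym.
Qed.

Lemma XD_ge0 n p q (Hne : exists z0, on_boundary n z0) : 0 <= Xdist n p q.
Proof.
  destruct p as [f x], q as [g y]. rewrite !XD_eq. destruct (Bool.eqb f g).
  - apply eucl_ge0.
  - destruct Hne as [z0 Hz0]. apply (glb_ge _ (eucl x z0 + eucl z0 y)).
    + exists z0; auto.
    + apply BS_ge0.
    + apply BS_ge0.
Qed.

Lemma XD_same_point n p p' q q' : same_point n p p' -> same_point n q q' ->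
  Xdist n p q = Xdist n p' q'.
Proof.
  intros Hp Hq.
  assert (H1 : Xdist n p q = Xdist n p' q).
  { destruct Hp as [-> | [E Hb]]; auto.
    destruct p as [f x], p' as [f' x'], q as [g y]. simpl in *. subst.
    rewrite !XD_bdl; auto. }
  rewrite H1. clear H1 Hp.
  destruct Hq as [-> | [E Hb]]; auto.
  destruct p' as [f x], q as [g y], q' as [g' y']. simpl in *. subst.
  rewrite !XD_bdr; auto.
Qed.

Lemma XD_tri n p q r (Hne : exists z0, on_boundary n z0) :
  Xdist n p r <= Xdist n p q + Xdist n q r.
Proof.
  destruct p as [f x], q as [g y], r as [h w]. rewrite !XD_eq.
  destruct Hne as [z0 Hz0].
  assert (Ne : forall a b, BS n a b (eucl a z0 + eucl z0 b)) by (intros; exists z0; auto).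
  destruct f, g, h; simpl.
  all: try apply eucl_tri.
  all: match goal with
  | |- eucl ?x ?w <= real (Glb_Rbar (BS ?n ?x ?y)) + real (Glb_Rbar (BS ?n ?y ?w)) =>
      assert (eucl x w - real (Glb_Rbar (BS n y w)) <= real (Glb_Rbar (BS n x y)));
      [ apply (glb_ge _ _ _ (Ne x y)); [apply BS_ge0|];
        intros a [z [Hz ->]];
        assert (eucl x w - (eucl x z + eucl z y) <= real (Glb_Rbar (BS n y w)));
        [ apply (glb_ge _ _ _ (Ne y w)); [apply BS_ge0|];
          intros b [z' [Hz' ->]];
          pose proof (eucl_tri x z w); pose proof (eucl_tri z y w); pose proof (eucl_tri y z' w); lra
        | lra ]
      | lra ]
  | |- real (Glb_Rbar (BS ?n ?x ?w)) <= eucl ?x ?y + real (Glb_Rbar (BS ?n ?y ?w)) =>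
      assert (real (Glb_Rbar (BS n x w)) - eucl x y <= real (Glb_Rbar (BS n y w)));
      [ apply (glb_ge _ _ _ (Ne y w)); [apply BS_ge0|];
        intros a [z [Hz ->]];
        assert (real (Glb_Rbar (BS n x w)) <= eucl x z + eucl z w);
        [ apply glb_le; [exists z; auto | apply BS_ge0] |
          pose proof (eucl_tri x y z); lra ]
      | lra ]
  | |- real (Glb_Rbar (BS ?n ?x ?w)) <= real (Glb_Rbar (BS ?n ?x ?y)) + eucl ?y ?w =>
      assert (real (Glb_Rbar (BS n x w)) - eucl y w <= real (Glb_Rbar (BS n x y)));
      [ apply (glb_ge _ _ _ (Ne x y)); [apply BS_ge0|];
        intros a [z [Hz ->]];
        assert (real (Glb_Rbar (BS n x w)) <= eucl x z + eucl z w);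
        [ apply glb_le; [exists z; auto | apply BS_ge0] |
          pose proof (eucl_tri z y w); lra ]
      | lra ]
  end.
Qed.

Lemma frame_ineq a b c x1 x2 y1 y2 z1 z2 :
  a ^ 2 + b ^ 2 = 1 -> a * z1 + b * z2 = c ->
  sqrt ((x1 - y1) ^ 2 + (x2 - y2) ^ 2 + 4 * (c - (x1 * a + x2 * b)) * (c - (y1 * a + y2 * b)))
  <= eucl (x1, x2) (z1, z2) + eucl (z1, z2) (y1, y2).
Proof.
  intros Hab Hz. unfold eucl; cbn [fst snd].
  set (hx := c - (x1 * a + x2 * b)). set (hy := c - (y1 * a + y2 * b)).
  set (tx := - b * (x1 - z1) + a * (x2 - z2)). set (ty := - b * (z1 - y1) + a * (z2 - y2)).
  assert (E1 : (x1 - z1) ^ 2 + (x2 - z2) ^ 2 = hx ^ 2 + tx ^ 2).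
  { unfold hx, tx. rewrite <- Hz.
    transitivity ((a^2+b^2) * ((x1 - z1) ^ 2 + (x2 - z2) ^ 2)); [rewrite Hab; ring | ring]. }
  assert (E2 : (z1 - y1) ^ 2 + (z2 - y2) ^ 2 = hy ^ 2 + ty ^ 2).
  { unfold hy, ty. rewrite <- Hz.
    transitivity ((a^2+b^2) * ((z1 - y1) ^ 2 + (z2 - y2) ^ 2)); [rewrite Hab; ring | ring]. }
  assert (E3 : (x1 - y1) ^ 2 + (x2 - y2) ^ 2 + 4 * hx * hy = (hx + hy) ^ 2 + (tx + ty) ^ 2).
  { unfold hx, hy, tx, ty. rewrite <- Hz.
    transitivity ((a^2+b^2) * ((x1 - y1) ^ 2 + (x2 - y2) ^ 2) + 4 * (a * z1 + b * z2 - (x1 * a + x2 * b)) * (a * z1 + b * z2 - (y1 * a + y2 * b))); [rewrite Hab; ring | ring]. }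
  rewrite E1, E2, E3. apply minkowski.
Qed.

Lemma interp_dist l l' A B :
  eucl ((1 - l) * fst A + l * fst B, (1 - l) * snd A + l * snd B)
       ((1 - l') * fst A + l' * fst B, (1 - l') * snd A + l' * snd B)
  = Rabs (l - l') * eucl A B.
Proof.
  unfold eucl; cbn [fst snd].
  replace (((1 - l) * fst A + l * fst B - ((1 - l') * fst A + l' * fst B)) ^ 2 +
           ((1 - l) * snd A + l * snd B - ((1 - l') * snd A + l' * snd B)) ^ 2)
    with ((l - l')² * ((fst A - fst B) ^ 2 + (snd A - snd B) ^ 2)) by (unfold Rsqr; ring).
  rewrite sqrt_mult_alt by apply Rle_0_sqr. rewrite sqrt_Rsqr_abs. reflexivity.
Qed.

Definition th n := PI / INR n.
Definition Mr n e t : R * R :=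
  (cos (PI / INR n) * cos ((2 * (INR e + t) + 1) * PI / INR n),
   cos (PI / INR n) * sin ((2 * (INR e + t) + 1) * PI / INR n)).
Definition sq n := 2 * cos (PI / INR n) ^ 2 * (1 - cos (2 * (PI / INR n))).

Lemma Mr_dist n e t : (n <> 0)%nat -> eucl (Mr n e t) (Mr n e (t + 1)) = sqrt (sq n).
Proof.
  intros Hn. assert (HnR : INR n <> 0) by (apply not_0_INR; auto).
  unfold eucl, Mr, sq; cbn [fst snd]. f_equal.
  set (c := cos (PI / INR n)).
  set (a := (2 * (INR e + t) + 1) * PI / INR n).
  replace ((2 * (INR e + (t + 1)) + 1) * PI / INR n) with (a + 2 * (PI / INR n)) by (unfold a; field; auto).
  rewrite cos_plus, sin_plus.
  set (C := cos (2 * (PI / INR n))). set (S := sin (2 * (PI / INR n))).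
  transitivity (c^2 * ((cos a)^2 + (sin a)^2) * ((1 - C)^2 + S^2)); [ring|].
  pose proof (sin2_cos2 a) as H1. pose proof (sin2_cos2 (2 * (PI / INR n))) as H2.
  unfold Rsqr in *. fold C S in H2.
  replace ((cos a)^2 + (sin a)^2) with 1 by (rewrite <- H1; ring).
  replace (S^2) with (1 - C^2) by (rewrite <- H2; ring). ring.
Qed.

Lemma edge_Mr n e j t : (n <> 0)%nat ->
  edge_fun n j (Mr n e t) = cos (PI / INR n) * cos (2 * (PI / INR n) * (INR j - INR e - t)).
Proof.
  intros Hn. assert (HnR : INR n <> 0) by (apply not_0_INR; auto).
  unfold edge_fun, Mr; cbn [fst snd].
  replace (2 * (PI / INR n) * (INR j - INR e - t)) with
    ((2 * INR j + 1) * PI / INR n - (2 * (INR e + t) + 1) * PI / INR n) by (field; auto).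
  rewrite cos_minus. ring.
Qed.

Lemma edge_lin n j p A B :
  edge_fun n j (p * fst A + (1 - p) * fst B, p * snd A + (1 - p) * snd B) =
  p * edge_fun n j A + (1 - p) * edge_fun n j B.
Proof. unfold edge_fun; cbn [fst snd]. ring. Qed.

Lemma cos_per_nat x k : cos (x + 2 * PI * INR k) = cos x.
Proof. rewrite <- (cos_period x k). f_equal. ring. Qed.
Lemma sin_per_nat x k : sin (x + 2 * PI * INR k) = sin x.
Proof. rewrite <- (sin_period x k). f_equal. ring. Qed.

Lemma cos_per x z : cos (x + 2 * PI * IZR z) = cos x.
Proof.
  destruct (Z_le_gt_dec 0 z).
  - replace z with (Z.of_nat (Z.to_nat z)) by lia. rewrite <- INR_IZR_INZ. apply cos_per_nat.
  - replace x with ((x + 2 * PI * IZR z) + 2 * PI * INR (Z.to_nat (- z))) at 2.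
    + rewrite cos_per_nat. reflexivity.
    + rewrite INR_IZR_INZ. rewrite Z2Nat.id by lia. rewrite opp_IZR. ring.
Qed.
Lemma sin_per x z : sin (x + 2 * PI * IZR z) = sin x.
Proof.
  destruct (Z_le_gt_dec 0 z).
  - replace z with (Z.of_nat (Z.to_nat z)) by lia. rewrite <- INR_IZR_INZ. apply sin_per_nat.
  - replace x with ((x + 2 * PI * IZR z) + 2 * PI * INR (Z.to_nat (- z))) at 2.
    + rewrite sin_per_nat. reflexivity.
    + rewrite INR_IZR_INZ. rewrite Z2Nat.id by lia. rewrite opp_IZR. ring.
Qed.

Lemma INR_n_pos n : (3 <= n)%nat -> 3 <= INR n.
Proof. intros H. replace 3 with (INR 3) by (simpl; ring). apply le_INR; auto. Qed.

Lemma th_mul n : (n <> 0)%nat -> INR n * (PI / INR n) = PI.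
Proof. intros H. field. apply not_0_INR; auto. Qed.

Lemma cos_bound_int n z : (3 <= n)%nat -> (z mod Z.of_nat n <> 0)%Z ->
  cos (2 * (PI / INR n) * IZR z) <= cos (2 * (PI / INR n)).
Proof.
  intros Hn Hz. pose proof (INR_n_pos n Hn) as HnR. pose proof PI_RGT_0 as Hpi.
  set (nz := Z.of_nat n) in *.
  assert (Hnz : (0 < nz)%Z) by (unfold nz; lia).
  pose proof (Z.mod_pos_bound z nz Hnz) as Hr.
  pose proof (Z.div_mod z nz ltac:(lia)) as Hd.
  set (r := (z mod nz)%Z) in *. set (w := (z / nz)%Z) in *.
  assert (E : 2 * (PI / INR n) * IZR z = 2 * (PI / INR n) * IZR r + 2 * PI * IZR w).
  { assert (INR n <> 0) by (apply not_0_INR; lia). rewrite Hd, plus_IZR, mult_IZR. unfold nz. rewrite <- INR_IZR_INZ. field. auto. }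
  rewrite E, cos_per.
  assert (Hr1 : 1 <= IZR r) by (apply IZR_le; lia).
  assert (Hr2 : IZR r <= INR n - 1).
  { assert (IZR r <= IZR (nz - 1)) by (apply IZR_le; lia).
    rewrite minus_IZR in H. unfold nz in H. rewrite <- INR_IZR_INZ in H. exact H. }
  set (t := PI / INR n).
  assert (Ht0 : 0 < t) by (unfold t; apply Rdiv_lt_0_compat; lra).
  assert (Htn : INR n * t = PI) by (unfold t; field; apply not_0_INR; lia).
  assert (Ht3 : 3 * t <= PI) by nra.
  set (y := 2 * t * IZR r).
  assert (Hy1 : 2 * t <= y) by (unfold y; nra).
  assert (Hy2 : y <= 2 * PI - 2 * t) by (unfold y; nra).
  destruct (Rle_or_lt y PI).
  - apply cos_decr_1; lra.
  - replace (cos y) with (cos (2 * PI - y)).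
    + apply cos_decr_1; lra.
    + rewrite cos_minus, cos_2PI, sin_2PI. ring.
Qed.

Definition segpt (A B : R * R) (l : R) : R * R :=
  ((1 - l) * fst A + l * fst B, (1 - l) * snd A + l * snd B).

Lemma edge_seg n j A B l : edge_fun n j (segpt A B l) = (1 - l) * edge_fun n j A + l * edge_fun n j B.
Proof. unfold edge_fun, segpt; cbn [fst snd]. ring. Qed.

Lemma c_pos n : (3 <= n)%nat -> 0 < cos (PI / INR n).
Proof.
  intros Hn. pose proof (INR_n_pos n Hn). pose proof PI_RGT_0.
  apply cos_gt_0.
  - assert (0 < PI / INR n) by (apply Rdiv_lt_0_compat; lra). lra.
  - apply (Rmult_lt_reg_r (INR n)); [lra|]. unfold Rdiv. rewrite Rmult_assoc, Rinv_l by lra. nra.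
Qed.

Lemma sq_pos n : (3 <= n)%nat -> 0 < sq n.
Proof.
  intros Hn. unfold sq. pose proof (c_pos n Hn). pose proof (INR_n_pos n Hn). pose proof PI_RGT_0.
  assert (cos (2 * (PI / INR n)) < 1).
  { rewrite <- cos_0. apply cos_decreasing_1; try lra.
    - assert (0 < PI / INR n) by (apply Rdiv_lt_0_compat; lra). lra.
    - assert (PI / INR n <= PI / 3) by (apply Rmult_le_compat_l; [lra| apply Rinv_le_contravar; lra]). lra.
    - assert (0 < PI / INR n) by (apply Rdiv_lt_0_compat; lra). lra. }
  assert (0 < cos (PI / INR n) ^ 2) by nra. nra.
Qed.

Lemma geo n e k lam mu z : (3 <= n)%nat -> 0 <= mu -> mu <= lam -> lam <= 1 -> on_boundary n z ->
  (1 - lam + mu) * sqrt (sq n) <=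
  eucl (segpt (Mr n e (IZR k)) (Mr n e (IZR k + 1)) lam) z +
  eucl z (segpt (Mr n e (IZR k + 1)) (Mr n e (IZR k + 2)) mu).
Proof.
  intros Hn H1 H2 H3 [_ [j [Hj Hz]]].
  assert (Hn0 : (n <> 0)%nat) by lia.
  assert (HnR : INR n <> 0) by (apply not_0_INR; auto).
  pose proof (c_pos n Hn) as Hc. pose proof (sq_pos n Hn) as Hsq.
  set (X := segpt (Mr n e (IZR k)) (Mr n e (IZR k + 1)) lam).
  set (Y := segpt (Mr n e (IZR k + 1)) (Mr n e (IZR k + 2)) mu).
  set (c := cos (PI / INR n)) in *.
  destruct z as [z1 z2].
  assert (Hab : cos ((2 * INR j + 1) * PI / INR n) ^ 2 + sin ((2 * INR j + 1) * PI / INR n) ^ 2 = 1).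
  { pose proof (sin2_cos2 ((2 * INR j + 1) * PI / INR n)). unfold Rsqr in H. lra. }
  assert (Hz' : cos ((2 * INR j + 1) * PI / INR n) * z1 + sin ((2 * INR j + 1) * PI / INR n) * z2 = c).
  { rewrite <- Hz. unfold edge_fun. cbn [fst snd]. ring. }
  pose proof (frame_ineq _ _ _ (fst X) (snd X) (fst Y) (snd Y) z1 z2 Hab Hz') as Hfr.
  rewrite <- !surjective_pairing in Hfr.
  change (fst X * cos ((2 * INR j + 1) * PI / INR n) + snd X * sin ((2 * INR j + 1) * PI / INR n))
    with (edge_fun n j X) in Hfr.
  change (fst Y * cos ((2 * INR j + 1) * PI / INR n) + snd Y * sin ((2 * INR j + 1) * PI / INR n))
    with (edge_fun n j Y) in Hfr.
  eapply Rle_trans; [|exact Hfr]. clear Hfr.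
  set (t := PI / INR n) in *.
  set (C := cos (2 * t)).
  set (D := INR j - INR e - IZR k - 1).
  set (co := cos (2 * t * D)). set (c1 := cos (2 * t * (D + 1))). set (cm := cos (2 * t * (D - 1))).
  assert (EX : edge_fun n j X = (1 - lam) * c * c1 + lam * c * co).
  { unfold X. rewrite edge_seg, !edge_Mr by auto. fold t c.
    unfold c1, co. replace (INR j - INR e - IZR k) with (D + 1) by (unfold D; ring).
    replace (INR j - INR e - (IZR k + 1)) with D by (unfold D; ring). ring. }
  assert (EY : edge_fun n j Y = (1 - mu) * c * co + mu * c * cm).
  { unfold Y. rewrite edge_seg, !edge_Mr by auto. fold t c.
    unfold cm, co. replace (INR j - INR e - (IZR k + 2)) with (D - 1) by (unfold D; ring).
    replace (INR j - INR e - (IZR k + 1)) with D by (unfold D; ring). ring. }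
  assert (EXY : (fst X - fst Y) ^ 2 + (snd X - snd Y) ^ 2 =
     c ^ 2 * ((1 - lam - mu) ^ 2 * (1 - C) ^ 2 + (1 - lam + mu) ^ 2 * (1 - C ^ 2))).
  { unfold X, Y, segpt, Mr. cbn [fst snd]. fold t c.
    set (b := (2 * (INR e + (IZR k + 1)) + 1) * PI / INR n).
    replace ((2 * (INR e + IZR k) + 1) * PI / INR n) with (b - 2 * t) by (unfold b, t; field; auto).
    replace ((2 * (INR e + (IZR k + 2)) + 1) * PI / INR n) with (b + 2 * t) by (unfold b, t; field; auto).
    rewrite cos_minus, sin_minus, cos_plus, sin_plus. fold C.
    set (S := sin (2 * t)).
    transitivity (c ^ 2 * (cos b ^ 2 + sin b ^ 2) * ((1 - lam - mu) ^ 2 * (1 - C) ^ 2 + (1 - lam + mu) ^ 2 * S ^ 2)); [ring|].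
    pose proof (sin2_cos2 b) as Hb. pose proof (sin2_cos2 (2 * t)) as Ht. unfold Rsqr in *. fold C S in Ht.
    replace (cos b ^ 2 + sin b ^ 2) with 1 by (rewrite <- Hb; ring).
    replace (S ^ 2) with (1 - C ^ 2) by (rewrite <- Ht; ring). ring. }
  rewrite EXY, EX, EY.
  assert (HC1 : C <= 1) by apply COS_bound.
  assert (Hc1 : c1 <= 1) by apply COS_bound.
  assert (Hcm : cm <= 1) by apply COS_bound.
  assert (Hco1 : co <= 1) by apply COS_bound.
  assert (KEY : (1 - lam) * mu * c ^ 2 * (1 - C) ^ 2 <=
     (c - ((1 - lam) * c * c1 + lam * c * co)) * (c - ((1 - mu) * c * co + mu * c * cm))).
  { set (Dz := (Z.of_nat j - Z.of_nat e - k - 1)%Z).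
    assert (ED : D = IZR Dz).
    { unfold D, Dz. rewrite !minus_IZR, <- !INR_IZR_INZ. ring. }
    destruct (Z.eq_dec (Dz mod Z.of_nat n) 0) as [E0 | E0].
    - assert (Hd := Z.div_mod Dz (Z.of_nat n) ltac:(lia)). rewrite E0, Z.add_0_r in Hd.
      set (w := (Dz / Z.of_nat n)%Z) in *.
      assert (E2 : 2 * t * D = 0 + 2 * PI * IZR w).
      { rewrite ED, Hd, mult_IZR, <- INR_IZR_INZ. unfold t. field. auto. }
      assert (Eco : co = 1) by (unfold co; rewrite E2, cos_per; apply cos_0).
      assert (Ec1 : c1 = C).
      { unfold c1, C. replace (2 * t * (D + 1)) with (2 * t + 2 * PI * IZR w) by lra. apply cos_per. }
      assert (Ecm : cm = C).
      { unfold cm, C. replace (2 * t * (D - 1)) with (- (2 * t) + 2 * PI * IZR w) by lra.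
        rewrite cos_per. apply cos_neg. }
      rewrite Eco, Ec1, Ecm. apply Req_le. ring.
    - assert (Hco : co <= C) by (unfold co, C; rewrite ED; apply cos_bound_int; auto).
      assert (HX : c * lam * (1 - C) <= c - ((1 - lam) * c * c1 + lam * c * co)).
      { assert (0 <= (1 - lam) * c * (1 - c1)) by (apply Rmult_le_pos; [apply Rmult_le_pos|]; lra).
        assert (c * lam * (C - co) >= 0) by (apply Rle_ge, Rmult_le_pos; [apply Rmult_le_pos|]; lra). nra. }
      assert (HY : c * (1 - mu) * (1 - C) <= c - ((1 - mu) * c * co + mu * c * cm)).
      { assert (0 <= mu * c * (1 - cm)) by (apply Rmult_le_pos; [apply Rmult_le_pos|]; lra).
        assert (c * (1 - mu) * (C - co) >= 0) by (apply Rle_ge, Rmult_le_pos; [apply Rmult_le_pos|]; lra). nra. }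
      assert (P1 : 0 <= c * lam * (1 - C)) by (apply Rmult_le_pos; [apply Rmult_le_pos|]; lra).
      assert (P2 : 0 <= c * (1 - mu) * (1 - C)) by (apply Rmult_le_pos; [apply Rmult_le_pos|]; lra).
      apply Rle_trans with ((c * lam * (1 - C)) * (c * (1 - mu) * (1 - C))).
      + assert (0 <= c ^ 2 * (1 - C) ^ 2) by (apply Rmult_le_pos; apply pow2_ge_0).
        assert ((1 - lam) * mu <= lam * (1 - mu)) by nra.
        replace ((c * lam * (1 - C)) * (c * (1 - mu) * (1 - C))) with (lam * (1 - mu) * (c ^ 2 * (1 - C) ^ 2)) by ring.
        replace ((1 - lam) * mu * c ^ 2 * (1 - C) ^ 2) with ((1 - lam) * mu * (c ^ 2 * (1 - C) ^ 2)) by ring.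
        apply Rmult_le_compat_r; auto.
      + apply Rmult_le_compat; auto. }
  apply le_sqrt_of_sq.
  - apply Rmult_le_pos; [lra | apply sqrt_pos].
  - replace ((1 - lam + mu) * sqrt (sq n) * ((1 - lam + mu) * sqrt (sq n))) with
      ((1 - lam + mu) ^ 2 * (sqrt (sq n) * sqrt (sq n))) by ring.
    rewrite sqrt_sqrt by lra. unfold sq. fold t c C.
    nra.
Qed.

Lemma Mr_bd n e k : (3 <= n)%nat -> on_boundary n (Mr n e (IZR k)).
Proof.
  intros Hn. assert (Hn0 : (n <> 0)%nat) by lia.
  pose proof (c_pos n Hn) as Hc.
  split.
  - intros j Hj. rewrite edge_Mr by auto.
    pose proof (COS_bound (2 * (PI / INR n) * (INR j - INR e - IZR k))) as [_ Hb].
    nra.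
  - set (r := ((Z.of_nat e + k) mod Z.of_nat n)%Z).
    assert (Hr := Z.mod_pos_bound (Z.of_nat e + k) (Z.of_nat n) ltac:(lia)). fold r in Hr.
    assert (Hd := Z.div_mod (Z.of_nat e + k) (Z.of_nat n) ltac:(lia)). fold r in Hd.
    set (w := ((Z.of_nat e + k) / Z.of_nat n)%Z) in *.
    exists (Z.to_nat r). split; [lia|].
    rewrite edge_Mr by auto.
    assert (E : 2 * (PI / INR n) * (INR (Z.to_nat r) - INR e - IZR k) = 0 + 2 * PI * IZR (- w)).
    { rewrite (INR_IZR_INZ (Z.to_nat r)), Z2Nat.id by lia.
      replace (IZR r) with (IZR (Z.of_nat e + k) - IZR (Z.of_nat n) * IZR w)
        by (rewrite <- mult_IZR, <- minus_IZR; f_equal; lia).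
      rewrite plus_IZR, opp_IZR, <- !INR_IZR_INZ. field. apply not_0_INR; auto. }
    rewrite E, cos_per, cos_0. ring.
Qed.

Lemma glb_val n e k lam mu : (3 <= n)%nat -> 0 <= mu -> mu <= lam -> lam <= 1 ->
  real (Glb_Rbar (BS n (segpt (Mr n e (IZR k)) (Mr n e (IZR k + 1)) lam)
                       (segpt (Mr n e (IZR k + 1)) (Mr n e (IZR k + 2)) mu)))
  = (1 - lam + mu) * sqrt (sq n).
Proof.
  intros Hn H1 H2 H3. assert (Hn0 : (n <> 0)%nat) by lia.
  apply glb_eq.
  - exists (Mr n e (IZR k + 1)). split.
    + replace (IZR k + 1) with (IZR (k + 1)) by (rewrite plus_IZR; ring). apply Mr_bd; auto.
    + set (A := Mr n e (IZR k)). set (B := Mr n e (IZR k + 1)). set (Cc := Mr n e (IZR k + 2)).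
      assert (EB1 : B = segpt A B 1).
      { unfold segpt. rewrite (surjective_pairing B) at 1. f_equal; simpl; ring. }
      assert (EB0 : B = segpt B Cc 0).
      { unfold segpt. rewrite (surjective_pairing B) at 1. f_equal; simpl; ring. }
      assert (D1 : eucl (segpt A B lam) (segpt A B 1) = (1 - lam) * sqrt (sq n)).
      { unfold segpt. rewrite interp_dist. unfold A, B. rewrite Mr_dist by auto.
        rewrite Rabs_left1 by lra. ring. }
      assert (D2 : eucl (segpt B Cc 0) (segpt B Cc mu) = mu * sqrt (sq n)).
      { unfold segpt. rewrite interp_dist. unfold Cc, B.
        replace (IZR k + 2) with ((IZR k + 1) + 1) by ring. rewrite Mr_dist by auto.
        rewrite Rabs_left1 by lra. ring. }
      rewrite <- EB1 in D1. rewrite <- EB0 in D2. rewrite D1, D2. ring.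
  - intros r [z [Hz ->]]. apply geo; auto.
  - pose proof (sqrt_pos (sq n)). apply Rmult_le_pos; lra.
Qed.

Definition Gam n e f0 u : Xpoint :=
  let K := Int_part (INR (nsegs n) * u) in
  let lam := INR (nsegs n) * u - IZR K in
  (xorb f0 (Z.odd K), segpt (Mr n e (IZR K)) (Mr n e (IZR K + 1)) lam).

Lemma nsegs_pos n : (3 <= n)%nat -> 0 < INR (nsegs n).
Proof. intros Hn. apply lt_0_INR. unfold nsegs. destruct (Nat.even n); lia. Qed.

Lemma K_Gam n e f0 u v : (3 <= n)%nat -> u <= v -> v <= u + 1 / INR (nsegs n) ->
  Xdist n (Gam n e f0 u) (Gam n e f0 v) = INR (nsegs n) * sqrt (sq n) * (v - u).
Proof.
  intros Hn Huv Hv. assert (Hn0 : (n <> 0)%nat) by lia.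
  pose proof (nsegs_pos n Hn) as HN.
  set (N := INR (nsegs n)) in *.
  assert (HNv : N * v <= N * u + 1).
  { replace 1 with (N * (1 / N)) by (field; lra). rewrite <- Rmult_plus_distr_l.
    apply Rmult_le_compat_l; lra. }
  assert (HNu : N * u <= N * v) by (apply Rmult_le_compat_l; lra).
  unfold Gam. fold N.
  set (K := Int_part (N * u)). set (K' := Int_part (N * v)).
  pose proof (base_Int_part (N * u)) as [B1 B2]. pose proof (base_Int_part (N * v)) as [B3 B4].
  fold K in B1, B2. fold K' in B3, B4.
  assert (HK : K' = K \/ K' = (K + 1)%Z).
  { assert (IZR K - 1 < IZR K') by lra. assert (IZR K' < IZR K + 2) by lra.
    rewrite <- minus_IZR in H. rewrite <- plus_IZR in H0.
    apply lt_IZR in H. apply lt_IZR in H0. lia. }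
  destruct HK as [HK | HK]; rewrite HK.
  - rewrite XD_eq. rewrite eqb_reflx. unfold segpt. rewrite interp_dist, Mr_dist by auto.
    rewrite Rabs_left1 by lra. ring.
  - rewrite XD_eq.
    replace (Bool.eqb (xorb f0 (Z.odd K)) (xorb f0 (Z.odd (K + 1)))) with false.
    2:{ rewrite Z.odd_add. simpl. destruct f0, (Z.odd K); reflexivity. }
    rewrite HK, plus_IZR in B3, B4. rewrite plus_IZR. replace (IZR K + 1 + 1) with (IZR K + 2) by ring.
    rewrite glb_val by (auto; lra). ring.
Qed.

Lemma oddZ i : Nat.odd i = Z.odd (Z.of_nat i) /\ Nat.even i = Z.even (Z.of_nat i).
Proof.
  induction i as [|i [IH1 IH2]]; [split; reflexivity|].
  rewrite Nat2Z.inj_succ, Nat.odd_succ, Nat.even_succ, Z.odd_succ, Z.even_succ. auto.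
Qed.

Lemma nsegs_prop n : exists m : Z, INR (nsegs n) = INR n * IZR m /\
  Z.odd (Z.of_nat (nsegs n)) = false.
Proof.
  unfold nsegs. destruct (Nat.even n) eqn:Ev.
  - exists 1%Z. split; [ring|]. destruct (oddZ n) as [H1 H2].
    rewrite <- H1, <- Nat.negb_even, Ev. reflexivity.
  - exists 2%Z. split.
    + rewrite mult_INR. simpl. ring.
    + rewrite Nat2Z.inj_mul. rewrite Z.odd_mul. reflexivity.
Qed.

Lemma midpt_Mr n e m x w : (n <> 0)%nat -> INR m = INR e + x + INR n * IZR w ->
  midpt n m = Mr n e x.
Proof.
  intros Hn Hm. assert (HnR : INR n <> 0) by (apply not_0_INR; auto).
  unfold midpt, Mr.
  replace ((2 * INR m + 1) * PI / INR n) with ((2 * (INR e + x) + 1) * PI / INR n + 2 * PI * IZR w)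
    by (rewrite Hm; field; auto).
  rewrite cos_per, sin_per. reflexivity.
Qed.

Lemma std_Gam n e f0 u : (3 <= n)%nat -> over_under_std n e f0 u = Gam n e f0 u.
Proof.
  intros Hn. assert (Hn0 : (n <> 0)%nat) by lia.
  destruct (nsegs_prop n) as [m [Hm Hodd]].
  unfold over_under_std, Gam.
  set (N := INR (nsegs n)) in *.
  set (z := Int_part u). set (K := Int_part (N * u)).
  pose proof (base_Int_part u) as [B1 B2]. pose proof (base_Int_part (N * u)) as [B3 B4].
  fold z in B1, B2. fold K in B3, B4.
  set (Nz := Z.of_nat (nsegs n)).
  assert (ENz : IZR Nz = N) by (unfold Nz, N; rewrite <- INR_IZR_INZ; reflexivity).
  assert (EI : Int_part (N * (u - IZR z)) = (K - Nz * z)%Z).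
  { symmetry. apply Int_part_spec. rewrite minus_IZR, mult_IZR, ENz. split; nra. }
  rewrite EI.
  assert (Hpos : (0 <= K - Nz * z)%Z).
  { assert (-1 < IZR (K - Nz * z)).
    { rewrite minus_IZR, mult_IZR, ENz. pose proof (nsegs_pos n Hn). fold N in H. nra. }
    apply lt_IZR in H. lia. }
  set (i := Z.to_nat (K - Nz * z)).
  assert (Ei : INR i = IZR K + INR n * IZR (- (m * z))).
  { unfold i. rewrite INR_IZR_INZ, Z2Nat.id by auto. rewrite minus_IZR, mult_IZR, ENz, opp_IZR, mult_IZR.
    rewrite Hm. ring. }
  assert (Elam : N * (u - IZR z) - INR i = N * u - IZR K).
  { rewrite Ei, opp_IZR, mult_IZR, Hm. ring. }
  rewrite Elam.
  assert (Eodd : Nat.odd i = Z.odd K).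
  { destruct (oddZ i) as [H _]. rewrite H. unfold i. rewrite Z2Nat.id by auto.
    rewrite Z.odd_sub, Z.odd_mul. fold Nz in Hodd. rewrite Hodd. simpl. destruct (Z.odd K); reflexivity. }
  rewrite Eodd.
  rewrite (midpt_Mr n e (e + i) (IZR K) (- (m * z))) by (auto; rewrite plus_INR, Ei; ring).
  rewrite (midpt_Mr n e (e + i + 1) (IZR K + 1) (- (m * z))) by (auto; rewrite !plus_INR, Ei; simpl; ring).
  reflexivity.
Qed.

Lemma Gam_per n e f0 u : (3 <= n)%nat -> Gam n e f0 (u + 1) = Gam n e f0 u.
Proof.
  intros Hn. rewrite <- !std_Gam by auto. unfold over_under_std.
  assert (E : Int_part (u + 1) = (Int_part u + 1)%Z).
  { symmetry. apply Int_part_spec. pose proof (base_Int_part u). rewrite plus_IZR. lra. }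
  rewrite E, plus_IZR. replace (u + 1 - (IZR (Int_part u) + 1)) with (u - IZR (Int_part u)) by ring.
  reflexivity.
Qed.

Lemma psum_const f c m : (forall i, (i < m)%nat -> f i = c) -> psum f m = INR m * c.
Proof.
  induction m; intros H; simpl; [ring|].
  rewrite IHm by (intros; apply H; lia). rewrite H by lia.
  destruct m; simpl; ring.
Qed.


Lemma main_gen n gamma k : (3 <= n)%nat -> is_over_under n gamma -> k = nsegs n ->
  one_over_k_geodesic n k gamma.
Proof.
  intros Hn [e [f0 [s [t0 [Hs Hg]]]]] Hk. subst k.
  assert (Hn0 : (n <> 0)%nat) by lia.
  pose proof (nsegs_pos n Hn) as HN.
  set (N := INR (nsegs n)) in *.
  set (L := N * sqrt (sq n)).
  assert (HN1 : 0 < 1 / N) by (apply Rdiv_lt_0_compat; lra).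
  assert (HL : 0 < L) by (unfold L; apply Rmult_lt_0_compat; auto; apply sqrt_lt_R0, sq_pos; auto).
  assert (Hne : exists z0, on_boundary n z0) by (exists (Mr n e (IZR 0)); apply Mr_bd; auto).
  assert (XG : forall a b, Xdist n (gamma a) (gamma b) = Xdist n (Gam n e f0 (s * a + t0)) (Gam n e f0 (s * b + t0))).
  { intros a b. rewrite <- !std_Gam by auto. apply XD_same_point; auto. }
  assert (GK : forall a b, a <= b -> b <= a + 1 / N -> Xdist n (gamma a) (gamma b) = (b - a) * L).
  { intros a b H1 H2. rewrite XG. destruct Hs as [-> | ->].
    - rewrite K_Gam by (fold N; auto; lra). unfold L, N. ring.
    - rewrite XD_sym. rewrite K_Gam by (fold N; auto; lra). unfold L, N. ring. }
  assert (GU : forall m a b, a <= b -> b - a <= INR m / N -> Xdist n (gamma a) (gamma b) <= (b - a) * L).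
  { induction m; intros a b H1 H2.
    - simpl in H2. unfold Rdiv in H2. rewrite Rmult_0_l in H2. rewrite GK; lra.
    - destruct (Rle_or_lt b (a + 1 / N)).
      + rewrite GK; lra.
      + pose proof (XD_tri n (gamma a) (gamma (a + 1 / N)) (gamma b) Hne).
        rewrite (GK a (a + 1 / N)) in H0 by lra.
        assert (Xdist n (gamma (a + 1 / N)) (gamma b) <= (b - (a + 1 / N)) * L).
        { apply IHm; try lra. rewrite S_INR in H2.
          replace ((INR m + 1) / N) with (INR m / N + 1 / N) in H2 by (field; lra). lra. }
        nra. }
  assert (GU' : forall a b, a <= b -> Xdist n (gamma a) (gamma b) <= (b - a) * L).
  { intros a b H. destruct (INR_archimed 1 ((b - a) * N)) as [m Hm]; [lra|].
    apply (GU m); auto. apply (Rmult_le_reg_r N); auto. unfold Rdiv. rewrite Rmult_assoc, Rinv_l by lra. lra. }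
  assert (LEN : forall a b, a <= b -> curve_length n gamma a b ((b - a) * L)).
  { intros a b Hab. split.
    - intros r [m [P [HP0 [HPm [Hmono ->]]]]].
      assert (forall m', (m' <= m)%nat -> psum (fun i => Xdist n (gamma (P i)) (gamma (P (S i)))) m' <= (P m' - P O) * L).
      { induction m'; intros Hm'; simpl; [lra|].
        pose proof (IHm' ltac:(lia)). pose proof (GU' (P m') (P (S m')) (Hmono m' ltac:(lia))). lra. }
      rewrite <- HP0, <- HPm. apply H; lia.
    - intros ub Hub. apply Hub.
      destruct (INR_archimed 1 ((b - a) * N)) as [M HM]; [lra|].
      assert (HM0 : 0 < INR M) by nra.
      exists M, (fun i => a + INR i * ((b - a) / INR M)). repeat split.
      + simpl. ring.
      + field. lra.
      + intros i _. rewrite S_INR. assert (0 <= (b - a) / INR M) by (apply Rdiv_le_0_compat; lra). lra.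
      + rewrite (psum_const _ ((b - a) / INR M * L)).
        * field. lra.
        * intros i _. rewrite GK.
          -- rewrite S_INR. ring.
          -- rewrite S_INR. assert (0 <= (b - a) / INR M) by (apply Rdiv_le_0_compat; lra). lra.
          -- rewrite S_INR. assert ((b - a) / INR M <= 1 / N).
             { apply (Rmult_le_reg_r (INR M * N)); [nra|]. 
               replace ((b - a) / INR M * (INR M * N)) with ((b - a) * N) by (field; lra).
               replace (1 / N * (INR M * N)) with (INR M) by (field; lra). lra. }
             lra. }
  exists L. split; [auto|]. split; [|split; [|split]].
  - intros t. rewrite XG.
    replace (Gam n e f0 (s * (t + 1) + t0)) with (Gam n e f0 (s * t + t0)).
    + rewrite K_Gam by (fold N; auto; try lra; assert (0 < 1 / N) by (apply Rdiv_lt_0_compat; lra); lra). ring.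
    + destruct Hs as [-> | ->].
      * replace (1 * (t + 1) + t0) with ((1 * t + t0) + 1) by ring. rewrite Gam_per; auto.
      * replace (-1 * t + t0) with ((-1 * (t + 1) + t0) + 1) by ring. rewrite Gam_per; auto.
  - exact LEN.
  - intros t. exists (1 / (2 * N)). split; [apply Rdiv_lt_0_compat; lra|].
    intros a b H1 H2 H3. rewrite GK; auto.
    assert (1 / (2 * N) + 1 / (2 * N) = 1 / N) by (field; lra). lra.
  - intros a b H1 H2 H3. fold N in H3 |- *.
    assert (E : L / N = (b - a) * L).
    { apply Rle_antisym.
      - apply H3. apply LEN; auto.
      - apply (LEN a b H1). apply H3. }
    assert (b - a = 1 / N) by (apply (Rmult_eq_reg_r L); [|lra]; rewrite <- E; field; lra).
    rewrite GK by lra. rewrite E. reflexivity.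
Qed.

Theorem mainTheorem1 (n : nat) (gamma : R -> Xpoint) :
  (3 <= n)%nat -> is_over_under n gamma ->
  (Nat.Even n -> one_over_k_geodesic n n gamma) /\
  (Nat.Odd n -> one_over_k_geodesic n (2 * n) gamma).
Proof.
  intros Hn Hg. split; intros Hp; apply main_gen; auto; unfold nsegs.
  - apply Nat.even_spec in Hp. rewrite Hp. reflexivity.
  - apply Nat.odd_spec in Hp. rewrite <- Nat.negb_even in Hp.
    destruct (Nat.even n); simpl in Hp; [discriminate|reflexivity].
Qed.
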